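(* Let $m\ge1$ be an integer and $\mathcal S'=\{x_0,x_1,x_2,\ldots,x_m\}$, with corresponding restricted right-arm rotation distance $d_{RRA}^{\mathcal S'}$ (rotations allowed at all right-arm nodes at levels $0,1,\ldots,m$). Then for every integer $n>m+4$ there exist finite rooted binary trees $T_1,T_2$, each with $n$ nodes, such that $d_{RRA}^{\mathcal S'}(T_1,T_2)$ is defined and $d_{RRA}^{\mathcal S'}(T_1,T_2)\ge 4n-4m-4$.
   Context: Trees: finite rooted binary trees, each internal vertex (node) having a left and a right child. The right arm consists of the root and all nodes reachable from the root by a path of right edges; the level of a node is its distance from the root. Right rotation at a node $N$ whose left child $M$ is a node (with $A,B$ the subtrees of $M$, $C$ the right subtree of $N$) replaces the subtree at $N$ by one whose root has left subtree $A$ and right child a node with left subtree $B$ and right subtree $C$; left rotation at $N$ is the inverse. Rotations preserve the number of nodes. $d_{RRA}^{\mathcal S'}(T_1,T_2)$ is the minimal number of rotations, each at a right-arm node at one of the levels $0,1,\ldots,m$, required to transform $T_1$ into $T_2$; it is defined when such a sequence exists. *)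

(* Defs.v *)
From Stdlib Require Import Arith.

(* Finite rooted binary trees: a tree is either empty (Leaf) or a node
   with a left and a right subtree.  Nodes = internal vertices. *)
Inductive tree : Type :=
| Leaf : tree
| Node : tree -> tree -> tree.

Fixpoint nodes (t : tree) : nat :=
  match t with
  | Leaf => 0
  | Node l r => S (nodes l + nodes r)
  end.

Definition rot_right (t : tree) : option tree :=
  match t with
  | Node (Node a b) c => Some (Node a (Node b c))
  | _ => None
  end.

Definition rot_left (t : tree) : option tree :=
  match t with
  | Node a (Node b c) => Some (Node (Node a b) c)
  | _ => None
  end.

Definition root_rotation (t t' : tree) : Prop :=
  rot_right t = Some t' \/ rot_left t = Some t'.

(* rarm_rotation k t t' : t' is obtained from t by a rotation at the
   right-arm node at level k (the node reached from the root by k right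
   edges). *)
Fixpoint rarm_rotation (k : nat) (t t' : tree) : Prop :=
  match k with
  | 0 => root_rotation t t'
  | S k' =>
      match t, t' with
      | Node l r, Node l' r' => l' = l /\ rarm_rotation k' r r'
      | _, _ => False
      end
  end.

(* One allowed move for S' = {x_0, ..., x_m}: a rotation at a right-arm
   node at one of the levels 0, 1, ..., m. *)
Definition rra_step (m : nat) (t t' : tree) : Prop :=
  exists k, k <= m /\ rarm_rotation k t t'.

Inductive rra_path (m : nat) : nat -> tree -> tree -> Prop :=
| rra_refl : forall t, rra_path m 0 t t
| rra_cons : forall j t u v,
    rra_step m t u -> rra_path m j u v -> rra_path m (S j) t v.

Definition drra_defined (m : nat) (t1 t2 : tree) : Prop :=
  exists j, rra_path m j t1 t2.

(* d_RRA^{S'}(T1,T2) >= b : every admissible sequence has length >= b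
   (i.e. the minimal length is at least b). *)
Definition drra_ge (m : nat) (t1 t2 : tree) (b : nat) : Prop :=
  forall j, rra_path m j t1 t2 -> b <= j.

(* Main.v *)
Require Import Defs.
From Stdlib Require Import Arith Lia ZArith List Bool.

Fixpoint rv (k : nat) : tree := match k with 0 => Leaf | S k => Node Leaf (rv k) end.
Fixpoint lv (k : nat) : tree := match k with 0 => Leaf | S k => Node (lv k) Leaf end.
Fixpoint arm (t : tree) : nat := match t with Leaf => 0 | Node _ r => S (arm r) end.
Fixpoint lastL (t : tree) : tree :=
  match t with
  | Leaf => Leaf
  | Node l r => match r with Leaf => l | Node _ _ => lastL r end
  end.
Fixpoint prevL (t : tree) : tree :=
  match t with
  | Leaf => Leaf
  | Node l r => match r with
                | Leaf => Leaf
                | Node _ Leaf => l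
                | Node _ (Node _ _) => prevL r
                end
  end.
Fixpoint isrv (t : tree) : bool :=
  match t with Leaf => true | Node Leaf r => isrv r | Node _ _ => false end.
Fixpoint vs (t : tree) : nat :=
  match t with Leaf => 0 | Node a b => (if isrv (Node a b) then 1 else 0) + vs b end.

Definition Phi (m : nat) (t : tree) : Z :=
  match lastL t with
  | Leaf => - Z.of_nat (arm t) - 2 * Z.of_nat (vs (prevL t))
  | Node a b =>
      - Z.of_nat (arm t) - 2 * Z.of_nat (vs (lastL (Node a b)))
      - (if andb (andb (Nat.eqb (arm t) 1) (Nat.eqb (arm (Node a b)) 1)) (isrv (lastL (Node a b))) then 2 else 0)
      + 2 * Z.max 0 (Z.of_nat (arm t) + Z.of_nat (arm (Node a b)) - 2 - Z.of_nat m)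
  end%Z.

Fixpoint rr (k : nat) (t t' : tree) : Prop :=
  match k with
  | 0 => rot_right t = Some t'
  | S k' => match t, t' with
            | Node l r, Node l' r' => l' = l /\ rr k' r r'
            | _, _ => False
            end
  end.

Lemma rarm_rr : forall k t t', rarm_rotation k t t' -> rr k t t' \/ rr k t' t.
Proof.
  induction k as [|k IH]; intros t t' H.
  - destruct H as [H|H]; [left; exact H|right].
    destruct t as [|a [|b c]]; simpl in H; try discriminate.
    injection H as <-; reflexivity.
  - destruct t as [|l r]; destruct t' as [|l' r']; simpl in H; try contradiction.
    destruct H as [-> H]. destruct (IH _ _ H); [left|right]; simpl; auto.
Qed.

Fixpoint plug (ls : list tree) (u : tree) : tree :=
  match ls with nil => u | cons l ls => Node l (plug ls u) end.

Lemma rr_plug : forall k t t', rr k t t' -> exists ls A B C,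
  length ls = k /\ t = plug ls (Node (Node A B) C) /\ t' = plug ls (Node A (Node B C)).
Proof.
  induction k as [|k IH]; intros t t' H.
  - destruct t as [|[|a b] c]; simpl in H; try discriminate.
    injection H as <-. exists nil, a, b, c. simpl; auto.
  - destruct t as [|l r]; destruct t' as [|l' r']; simpl in H; try contradiction.
    destruct H as [-> H]. destruct (IH _ _ H) as (ls & A & B & C & H1 & H2 & H3).
    exists (cons l ls), A, B, C. simpl. subst. auto.
Qed.

Lemma arm_plug : forall ls u, arm (plug ls u) = length ls + arm u.
Proof. induction ls; simpl; auto. Qed.

Lemma lastL_plug : forall ls x y, lastL (plug ls (Node x y)) = lastL (Node x y).
Proof. induction ls as [|l ls IH]; intros; simpl; auto.
  rewrite IH. destruct ls; reflexivity. Qed.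

Lemma prevL_cons : forall l u, 2 <= arm u -> prevL (Node l u) = prevL u.
Proof. intros l [|a [|b c]] H; simpl in *; try lia; reflexivity. Qed.

Lemma prevL_plug : forall ls x y z, prevL (plug ls (Node x (Node y z))) = prevL (Node x (Node y z)).
Proof. induction ls as [|l ls IH]; intros; [reflexivity|].
  change (plug (l :: ls) (Node x (Node y z))) with (Node l (plug ls (Node x (Node y z)))).
  rewrite prevL_cons. apply IH. rewrite arm_plug. simpl. lia. Qed.

Ltac crush :=
  repeat match goal with |- context [if ?b then _ else _] => destruct b eqn:? end;
  repeat match goal with
    | H : andb _ _ = true |- _ => apply andb_true_iff in H; destruct H
    | H : andb _ _ = false |- _ => apply andb_false_iff in H; destruct H
    | H : Nat.eqb _ _ = true |- _ => apply Nat.eqb_eq in H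
    | H : Nat.eqb _ _ = false |- _ => apply Nat.eqb_neq in H
    end; try discriminate; lia.

Lemma Phi_rr : forall m k t t', k <= m -> rr k t t' ->
  (Phi m t' <= Phi m t + 1 /\ Phi m t <= Phi m t' + 1)%Z.
Proof.
  intros m k t t' Hk H.
  destruct (rr_plug _ _ _ H) as (ls & A & B & C & Hl & -> & ->).
  unfold Phi. rewrite !lastL_plug, !arm_plug.
  destruct C as [|c1 [|c2 c3]].
  -
    destruct B as [|b1 b2].
    + simpl lastL. rewrite prevL_plug. simpl prevL. simpl arm.
      crush.
    + change (lastL (Node A (Node (Node b1 b2) Leaf))) with (Node b1 b2).
      change (lastL (Node (Node A (Node b1 b2)) Leaf)) with (Node A (Node b1 b2)).
      change (lastL (Node A (Node b1 b2))) with (lastL (Node b1 b2)).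
      change (arm (Node A (Node b1 b2))) with (S (arm (Node b1 b2))).
      change (arm (Node A (Node (Node b1 b2) Leaf))) with 2.
      change (arm (Node (Node A (Node b1 b2)) Leaf)) with 1.
      lazy beta iota. simpl lastL. simpl arm. crush.
  -
    destruct c1 as [|d1 d2]; lazy beta iota; rewrite ?prevL_plug; simpl lastL; simpl prevL; simpl arm; simpl vs; crush.
  -
    change (lastL (Node A (Node B (Node c1 (Node c2 c3))))) with (lastL (Node c2 c3)).
    change (lastL (Node (Node A B) (Node c1 (Node c2 c3)))) with (lastL (Node c2 c3)).
    rewrite !prevL_plug.
    rewrite (prevL_cons A) by (simpl; lia).
    rewrite (prevL_cons B) by (simpl; lia).
    rewrite (prevL_cons (Node A B)) by (simpl; lia).
    change (arm (Node A (Node B (Node c1 (Node c2 c3))))) with (S (S (S (S (arm c3))))).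
    change (arm (Node (Node A B) (Node c1 (Node c2 c3)))) with (S (S (S (arm c3)))).
    destruct (lastL (Node c2 c3)) as [|x y]; crush.
Qed.


Lemma Phi_step : forall m t u, rra_step m t u -> (Phi m t <= Phi m u + 1)%Z.
Proof.
  intros m t u [k [Hk H]]. destruct (rarm_rr _ _ _ H) as [H1|H1].
  - destruct (Phi_rr m k t u Hk H1); lia.
  - destruct (Phi_rr m k u t Hk H1); lia.
Qed.

Lemma Phi_path : forall m j t u, rra_path m j t u -> (Phi m t <= Phi m u + Z.of_nat j)%Z.
Proof.
  intros m j t u H; induction H.
  - lia.
  - pose proof (Phi_step _ _ _ H). lia.
Qed.

Lemma nodes_rv : forall k, nodes (rv k) = k.
Proof. induction k; simpl; auto. Qed.
Lemma arm_rv : forall k, arm (rv k) = k.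
Proof. induction k; simpl; auto. Qed.
Lemma isrv_rv : forall k, isrv (rv k) = true.
Proof. induction k; simpl; auto. Qed.
Lemma vs_rv : forall k, vs (rv k) = k.
Proof. induction k; simpl; auto. rewrite isrv_rv, IHk. reflexivity. Qed.
Lemma lastL_rv : forall k, lastL (rv k) = Leaf.
Proof. induction k as [|[|k] IH]; simpl; auto. Qed.

Lemma Phi_T1 : forall m p, Phi m (Node (rv (S (S p))) Leaf) = (-1 + 2 * Z.max 0 (Z.of_nat (S (S p)) - 1 - Z.of_nat m))%Z.
Proof.
  intros m p. unfold Phi.
  change (lastL (Node (rv (S (S p))) Leaf)) with (Node Leaf (rv (S p))).
  lazy beta iota.
  change (Node Leaf (rv (S p))) with (rv (S (S p))).
  rewrite lastL_rv, arm_rv. change (arm (Node (rv (S (S p))) Leaf)) with 1. change (vs Leaf) with 0. change ((S (S p) =? 1)%nat) with false. rewrite andb_false_r. rewrite andb_false_l. lazy beta iota. lia.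
Qed.

Lemma Phi_T2 : forall m p, Phi m (Node (Node (rv p) Leaf) Leaf) = (-1 - 2 * Z.of_nat p - 2)%Z.
Proof.
  intros m p. unfold Phi.
  change (lastL (Node (Node (rv p) Leaf) Leaf)) with (Node (rv p) Leaf).
  lazy beta iota.
  change (lastL (Node (rv p) Leaf)) with (rv p).
  rewrite isrv_rv, vs_rv. change (arm (Node (Node (rv p) Leaf) Leaf)) with 1. change (arm (Node (rv p) Leaf)) with 1. lazy beta iota delta [andb Nat.eqb]. lia.
Qed.

Lemma path_app : forall m j1 j2 t u v, rra_path m j1 t u -> rra_path m j2 u v -> rra_path m (j1 + j2) t v.
Proof.
  intros m j1 j2 t u v H1; induction H1; intros H2; simpl; auto.
  econstructor; eauto.
Qed.

Definition reach m t u := exists j, rra_path m j t u.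

Lemma reach_trans : forall m t u v, reach m t u -> reach m u v -> reach m t v.
Proof. intros m t u v [j1 H1] [j2 H2]. exists (j1 + j2). eapply path_app; eauto. Qed.

Lemma reach_step : forall m t u, rra_step m t u -> reach m t u.
Proof. intros m t u H. exists 1. econstructor; [exact H| constructor]. Qed.

Lemma step0R : forall m t u, rot_right t = Some u -> rra_step m t u.
Proof. intros. exists 0. split; [lia| left; auto]. Qed.
Lemma step0L : forall m t u, rot_left t = Some u -> rra_step m t u.
Proof. intros. exists 0. split; [lia| right; auto]. Qed.
Lemma step1R : forall m l t u, 1 <= m -> rot_right t = Some u -> rra_step m (Node l t) (Node l u).
Proof. intros. exists 1. split; [lia|]. simpl. split; [auto| left; auto]. Qed.
Lemma step1L : forall m l t u, 1 <= m -> rot_left t = Some u -> rra_step m (Node l t) (Node l u).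
Proof. intros. exists 1. split; [lia|]. simpl. split; [auto| right; auto]. Qed.

Definition At i k := Node (lv i) (Node (rv k) Leaf).
Definition Bt j k := Node (lv j) (Node (rv k) (Node Leaf Leaf)).

Lemma reach_A : forall m, 1 <= m -> forall k i, reach m (At i k) (At (i + k) 0).
Proof.
  intros m Hm k. induction k as [|k IH]; intros i.
  - rewrite Nat.add_0_r. exists 0. constructor.
  - eapply reach_trans.
    + eapply reach_trans; apply reach_step.
      * apply step1R; [exact Hm| reflexivity].
      * apply step0L. reflexivity.
    + replace (i + S k) with (S i + k) by lia. apply (IH (S i)).
Qed.

Lemma reach_B : forall m, 1 <= m -> forall j k, reach m (Bt j k) (Bt 0 (j + k)).
Proof.
  intros m Hm j. induction j as [|j IH]; intros k.
  - exists 0. constructor.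
  - eapply reach_trans.
    + eapply reach_trans; apply reach_step.
      * apply step0R. reflexivity.
      * apply step1L; [exact Hm| reflexivity].
    + replace (S j + k) with (j + S k) by lia. apply (IH (S k)).
Qed.

Theorem theorem3p10 :
  forall m : nat, 1 <= m ->
  forall n : nat, m + 4 < n ->
  exists t1 t2 : tree,
    nodes t1 = n /\ nodes t2 = n /\
    drra_defined m t1 t2 /\
    drra_ge m t1 t2 (4 * n - 4 * m - 4).
Proof.
  intros m Hm n Hn.
  destruct n as [|[|[|p]]]; try lia.
  exists (Node (rv (S (S p))) Leaf), (Node (Node (rv (S p)) Leaf) Leaf).
  split; [simpl; rewrite nodes_rv; lia|].
  split; [simpl; rewrite nodes_rv; lia|].
  split.
  - change (reach m (Node (rv (S (S p))) Leaf) (Node (Node (rv (S p)) Leaf) Leaf)).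
    apply (reach_trans _ _ (At 0 (S p))); [apply reach_step, step0R; reflexivity|].
    apply (reach_trans _ _ (At (0 + S p) 0)); [apply reach_A; exact Hm|].
    apply (reach_trans _ _ (Bt p 0)); [apply reach_step, step0R; reflexivity|].
    apply (reach_trans _ _ (Bt 0 (p + 0))); [apply reach_B; exact Hm|].
    rewrite Nat.add_0_r.
    apply (reach_trans _ _ (Node (rv (S p)) (Node Leaf Leaf))); [apply reach_step, step0L; reflexivity|].
    apply reach_step, step0L; reflexivity.
  - intros j Hj. apply Phi_path in Hj.
    rewrite Phi_T1, Phi_T2 in Hj. lia.
Qed.
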